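(* Assume the standing setting below and the structural assumption (H) below (with compact set $K\subset\Sigma$). Let $u$ be the solution of (E) and $c$ the ergodic constant. Then for every $x_0\in K$, the function $t\mapsto u(x_0,t)+ct$ is nonincreasing on $[0,\infty)$.
   Context: Standing setting. $\mathbb T^N=\mathbb R^N/\mathbb Z^N$ is the flat torus, $\Theta$ is a metric space and $C>0$ is a fixed constant. For every $\theta\in\Theta$: $\sigma_\theta\in W^{1,\infty}(\mathbb T^N;\mathcal M_N)$ with $|\sigma_\theta|,|D\sigma_\theta|\le C$, and $A_\theta=\sigma_\theta\sigma_\theta^T$; $H_\theta\in W^{1,\infty}_{\rm loc}(\mathbb T^N\times\mathbb R^N)$ with $|H_\theta(x,0)|\le C$, and for every $R>0$ there is $C_R>0$ independent of $\theta$ with $|H_\theta(x,p)-H_\theta(y,q)|\le C_R(|x-y|+|p-q|)$ for $|p|,|q|\le R$. (E): $u_t+\sup_{\theta}\{-\mathrm{tr}(A_\theta(x)D^2u)+H_\theta(x,Du)\}=0$ in $\mathbb T^N\times(0,\infty)$, $u(x,0)=u_0(x)$; (E$_\lambda$): $\lambda v_\lambda+\sup_{\theta}\{-\mathrm{tr}(A_\theta D^2v_\lambda)+H_\theta(x,Dv_\lambda)\}=0$; (S): $\sup_{\theta}\{-\mathrm{tr}(A_\theta(x)D^2v)+H_\theta(x,Dv)\}=c$. It is assumed that there exist viscosity solutions $u$ of (E) and $v_\lambda$ of (E$_\lambda$) ($\lambda>0$), $C$-Lipschitz in $x$ uniformly in $t,\lambda$; then comparison holds, there is a unique $c\in\mathbb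 R$ (ergodic constant) for which (S) has a Lipschitz solution, and $u+ct$ is bounded. $\Sigma:=\{x:A_\theta(x)=0\ \forall\theta\}$. Assumption (H): there is $\mu_0>1$ with $H_\theta(x,\mu p)-\mu H_\theta(x,p)\ge(1-\mu)c$ for all $(x,p)$, $\theta$, $1<\mu<\mu_0$; and there is a compact $K\subset\Sigma$ with $H_\theta(x,p)\ge c$ for all $(x,p)\in K\times\mathbb R^N$, $\theta\in\Theta$, and $\inf_\theta\{H_\theta(x,\mu p)-\mu H_\theta(x,p)\}>(1-\mu)c$ for all $x\in\Sigma$ with $\operatorname{dist}(x,K)\ne0$, $p\ne0$, $1<\mu\le\mu_0$. *)

(* Defs.v *)
From mathcomp Require Import ssreflect ssrfun ssrbool eqtype ssrnat fintype bigop.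
From Stdlib Require Import Reals ZArith.

Set Implicit Arguments.
Unset Strict Implicit.

Local Open Scope R_scope.

Definition pt (N : nat) := 'I_N -> R.
Definition mat (N : nat) := 'I_N -> 'I_N -> R.

Definition vadd N (x y : pt N) : pt N := fun i => x i + y i.
Definition vsub N (x y : pt N) : pt N := fun i => x i - y i.
Definition vscal N (a : R) (x : pt N) : pt N := fun i => a * x i.
Definition vzero N : pt N := fun _ => 0.
Definition dot N (x y : pt N) : R := \big[Rplus/0]_(i < N) (x i * y i).
Definition vnorm N (x : pt N) : R := sqrt (dot x x).

Definition mtr N (A : mat N) : mat N := fun i j => A j i.
Definition mmul N (A B : mat N) : mat N :=
  fun i j => \big[Rplus/0]_(k < N) (A i k * B k j).
Definition trace N (A : mat N) : R := \big[Rplus/0]_(i < N) A i i.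
Definition mnorm N (A : mat N) : R :=
  sqrt (\big[Rplus/0]_(i < N) \big[Rplus/0]_(j < N) (A i j * A i j)).
Definition msub N (A B : mat N) : mat N := fun i j => A i j - B i j.
Definition mzero N : mat N := fun _ _ => 0.
Definition msym N (X : mat N) : Prop := forall i j, X i j = X j i.
Definition quad N (X : mat N) (z : pt N) : R :=
  \big[Rplus/0]_(i < N) \big[Rplus/0]_(j < N) (X i j * z i * z j).

Definition diffmat N (s : mat N) : mat N := mmul s (mtr s).

(* Translation by an integer vector: Z^N-periodicity = functions on the torus. *)
Definition zshift N (x : pt N) (k : 'I_N -> Z) : pt N := fun i => x i + IZR (k i).

Definition periodic N (T : Type) (f : pt N -> T) : Prop :=
  forall x k, f (zshift x k) = f x.

Definition is_metric (T : Type) (d : T -> T -> R) : Prop :=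
  (forall a b, 0 <= d a b) /\ (forall a b, d a b = 0 <-> a = b) /\
  (forall a b, d a b = d b a) /\ (forall a b e, d a e <= d a b + d b e).

(* Compact subset of T^N, represented by its Z^N-periodic lift to R^N,
   which is closed in R^N. *)
Definition torus_compact N (K : pt N -> Prop) : Prop :=
  (forall x k, K (zshift x k) <-> K x) /\
  (forall x, (forall eps, 0 < eps -> exists y, K y /\ vnorm (vsub y x) < eps) -> K x).

Definition standing_data N (Theta : Type) (C : R)
  (sigma : Theta -> pt N -> mat N) (H : Theta -> pt N -> pt N -> R) : Prop :=
  0 < C /\
  (forall th, periodic (sigma th)) /\
  (forall th x, mnorm (sigma th x) <= C) /\
  (* sigma_theta in W^{1,oo} with |D sigma_theta| <= C, i.e. C-Lipschitz *)
  (forall th x y, mnorm (msub (sigma th x) (sigma th y)) <= C * vnorm (vsub x y)) /\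
  (forall th p, periodic (fun x => H th x p)) /\
  (forall th x, Rabs (H th x (@vzero N)) <= C) /\
  (forall Rr, 0 < Rr -> exists CR, 0 < CR /\
     forall th x y p q, vnorm p <= Rr -> vnorm q <= Rr ->
       Rabs (H th x p - H th y q) <= CR * (vnorm (vsub x y) + vnorm (vsub p q))).

Definition psuperjet N (u : pt N -> R -> R) (x : pt N) (t : R)
  (a : R) (p : pt N) (X : mat N) : Prop :=
  msym X /\
  forall eps, 0 < eps -> exists del, 0 < del /\
    forall y s, 0 < s -> vnorm (vsub y x) < del -> Rabs (s - t) < del ->
      u y s <= u x t + a * (s - t) + dot p (vsub y x) + / 2 * quad X (vsub y x)
               + eps * (vnorm (vsub y x) ^ 2 + Rabs (s - t)).

Definition psubjet N (u : pt N -> R -> R) (x : pt N) (t : R)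
  (a : R) (p : pt N) (X : mat N) : Prop :=
  msym X /\
  forall eps, 0 < eps -> exists del, 0 < del /\
    forall y s, 0 < s -> vnorm (vsub y x) < del -> Rabs (s - t) < del ->
      u y s >= u x t + a * (s - t) + dot p (vsub y x) + / 2 * quad X (vsub y x)
               - eps * (vnorm (vsub y x) ^ 2 + Rabs (s - t)).

Definition superjet N (v : pt N -> R) (x : pt N) (p : pt N) (X : mat N) : Prop :=
  msym X /\
  forall eps, 0 < eps -> exists del, 0 < del /\
    forall y, vnorm (vsub y x) < del ->
      v y <= v x + dot p (vsub y x) + / 2 * quad X (vsub y x) + eps * vnorm (vsub y x) ^ 2.

Definition subjet N (v : pt N -> R) (x : pt N) (p : pt N) (X : mat N) : Prop :=
  msym X /\
  forall eps, 0 < eps -> exists del, 0 < del /\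
    forall y, vnorm (vsub y x) < del ->
      v y >= v x + dot p (vsub y x) + / 2 * quad X (vsub y x) - eps * vnorm (vsub y x) ^ 2.

Definition Lop N (Theta : Type) (sigma : Theta -> pt N -> mat N)
  (H : Theta -> pt N -> pt N -> R) (th : Theta) (x p : pt N) (X : mat N) : R :=
  - trace (mmul (diffmat (sigma th x)) X) + H th x p.

Definition cont_on_closed_half N (u : pt N -> R -> R) : Prop :=
  forall x t, 0 <= t -> forall eps, 0 < eps -> exists del, 0 < del /\
    forall y s, 0 <= s -> vnorm (vsub y x) < del -> Rabs (s - t) < del ->
      Rabs (u y s - u x t) < eps.

(* The supremum over theta is encoded exactly:  sup_th f th <= 0  iff every
   f th <= 0 ;  sup_th f th >= 0  iff for all eps>0 some f th >= -eps. *)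
Definition visc_sol_E N (Theta : Type) (sigma : Theta -> pt N -> mat N)
  (H : Theta -> pt N -> pt N -> R) (u0 : pt N -> R) (u : pt N -> R -> R) : Prop :=
  cont_on_closed_half u /\
  (forall t, 0 <= t -> periodic (fun x => u x t)) /\
  (forall x, u x 0 = u0 x) /\
  (forall x t a p X, 0 < t -> psuperjet u x t a p X ->
     forall th, a + Lop sigma H th x p X <= 0) /\
  (forall x t a p X, 0 < t -> psubjet u x t a p X ->
     forall eps, 0 < eps -> exists th, a + Lop sigma H th x p X >= - eps).

(* v is a viscosity solution of  lam v + sup_th {-tr(A_th D^2 v) + H_th(x,Dv)} = c0
   on T^N ((E_lam) is lam > 0, c0 = 0;  (S) is lam = 0, c0 = c). *)
Definition visc_sol_stat N (Theta : Type) (sigma : Theta -> pt N -> mat N)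
  (H : Theta -> pt N -> pt N -> R) (lam c0 : R) (v : pt N -> R) : Prop :=
  periodic v /\
  (forall x eps, 0 < eps -> exists del, 0 < del /\
     forall y, vnorm (vsub y x) < del -> Rabs (v y - v x) < eps) /\
  (forall x p X, superjet v x p X ->
     forall th, lam * v x + Lop sigma H th x p X <= c0) /\
  (forall x p X, subjet v x p X ->
     forall eps, 0 < eps -> exists th, lam * v x + Lop sigma H th x p X >= c0 - eps).

Definition lipschitz N (C : R) (v : pt N -> R) : Prop :=
  forall x y, Rabs (v x - v y) <= C * vnorm (vsub x y).

Definition degenerate_set N (Theta : Type) (sigma : Theta -> pt N -> mat N) (x : pt N) : Prop :=
  forall th, diffmat (sigma th x) = @mzero N.

Definition assumption_H N (Theta : Type) (sigma : Theta -> pt N -> mat N)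
  (H : Theta -> pt N -> pt N -> R) (c : R) (K : pt N -> Prop) : Prop :=
  exists mu0, 1 < mu0 /\
  (forall th x p mu, 1 < mu < mu0 ->
     H th x (vscal mu p) - mu * H th x p >= (1 - mu) * c) /\
  torus_compact K /\
  (forall x, K x -> degenerate_set sigma x) /\
  (forall th x p, K x -> H th x p >= c) /\
  (forall x p mu, degenerate_set sigma x -> ~ K x -> p <> @vzero N -> 1 < mu <= mu0 ->
     (* inf_th {H(x,mu p) - mu H(x,p)} > (1-mu) c *)
     exists eta, 0 < eta /\ forall th,
       H th x (vscal mu p) - mu * H th x p >= (1 - mu) * c + eta).

(* Main.v *)
Require Import Defs.
From Stdlib Require Import Reals Lra ZArith.
From mathcomp Require Import all_boot all_order all_algebra.
From mathcomp Require Import all_classical all_reals all_analysis.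
From mathcomp Require Import Rstruct Rstruct_topology.
Import Order.TTheory GRing.Theory Num.Theory.
Import Defs.
Local Open Scope ring_scope.
Local Open Scope R_scope.

Lemma rabs_le a b : Rabs a <= b -> - b <= a <= b.
Proof. unfold Rabs; destruct (Rcase_abs a); lra. Qed.

Lemma entry_le_norm n (v : 'rV[R]_n) i : (`|v ord0 i| <= `|v|)%O.
Proof.
have /mapP[j Hj ->] : `|v ord0 i| \in [seq `|v x.1 x.2| | x : 'I_1 * 'I_n].
  by apply/mapP; exists (ord0, i) => //=; rewrite mem_enum.
by rewrite [leRHS]/Num.norm /= mx_normrE; apply/bigmax_geP; right => /=; exists j.
Qed.

Definition boxI N (x0 : pt N) (r a b : R) (i : 'I_N.+1) : set R :=
  if unlift ord_max i is Some j then `[(x0 j - r), (x0 j + r)]%classic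
  else `[a, b]%classic.

Lemma box_EVT (N : nat) (f : pt N -> R -> R) (x0 : pt N) (r a b : R) :
  (0 <= r) -> (a <= b) ->
  (forall y s eps, (0 < eps) -> exists del, (0 < del) /\
     forall y' s', (forall i, (Rabs (y' i - y i) < del)) -> (Rabs (s' - s) < del) ->
       (Rabs (f y' s' - f y s) < eps)) ->
  exists ys ss, (forall i, (Rabs (ys i - x0 i) <= r)) /\ (a <= ss <= b) /\
    forall y s, (forall i, (Rabs (y i - x0 i) <= r)) -> (a <= s <= b) ->
      (f y s <= f ys ss).
Proof.
move=> r0 ab fc.
pose Y (v : 'rV[R]_N.+1) : pt N := fun j => v ord0 (lift ord_max j).
pose S (v : 'rV[R]_N.+1) : R := v ord0 ord_max.
pose A := [set v : 'rV[R]_N.+1 | forall i, boxI N x0 r a b i (v ord0 i)]%classic.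
have cA : compact A.
  apply: rV_compact => i; rewrite /boxI; case: (unlift _ _) => *; exact: segment_compact.
pose mk (y : pt N) (s : R) : 'rV[R]_N.+1 :=
  \row_i (if unlift ord_max i is Some j then y j else s).
have YmkE y s : Y (mk y s) = y.
  by apply: funext => j; rewrite /Y /mk mxE liftK.
have SmkE y s : S (mk y s) = s by rewrite /S /mk mxE unlift_none.
have inA y s : (forall i, (Rabs (y i - x0 i) <= r)) -> (a <= s <= b) -> A (mk y s).
  move=> hy [hs1 hs2] i; rewrite /boxI mxE.
  case: (unlift _ _) => [j|]; rewrite /= in_itv /=; apply/andP; split; apply/RleP.
  - move: (hy j); move/rabs_le; lra.
  - move: (hy j); move/rabs_le; lra.
  - lra.
  - lra.
have A0 : (A !=set0)%classic.
  exists (mk x0 a); apply: inA => [i|]; last lra.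
  rewrite Rminus_diag Rabs_R0; lra.
have cF : continuous (fun v => f (Y v) (S v)).
  move=> v; apply/(@cvgrPdist_lt R R^o _ _ (nbhs_filter v)) => e /RltP e0.
  have [d [/RltP d0 hd]] := fc (Y v) (S v) e e0.
  apply/(@nbhs_normP R ('rV[R]_N.+1)); exists d => //= w; rewrite /ball_ /= => hw.
  apply/RltP; rewrite -RabsE Rabs_minus_sym; apply: hd.
  - move=> i; rewrite /Y RabsE; apply/RltP.
    apply: le_lt_trans hw; rewrite (distrC (w _ _)).
    by have := entry_le_norm _ (v - w)%R (lift ord_max i); rewrite !mxE.
  - rewrite /S RabsE; apply/RltP.
    apply: le_lt_trans hw; rewrite (distrC (w _ _)).
    by have := entry_le_norm _ (v - w)%R ord_max; rewrite !mxE.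
have [c cA' cmax] := EVT_max_rV A0 cA (continuous_subspaceT cF).
have Ac : A c by rewrite inE in cA'.
exists (Y c), (S c); split; [|split].
- move=> i; have := Ac (lift ord_max i); rewrite /boxI liftK /= in_itv /=.
  move=> /andP[/RleP h1 /RleP h2]; apply: Rabs_le; rewrite /Y; lra.
- have := Ac ord_max; rewrite /boxI unlift_none /= in_itv /=.
  by move=> /andP[/RleP h1 /RleP h2]; rewrite /S; lra.
- move=> y s hy hs; have := cmax (mk y s).
  rewrite YmkE SmkE => h; apply/RleP; apply: h; rewrite inE; exact: inA.
Qed.

Set Implicit Arguments.
Notation SUM n F := (\big[Rplus/0]_(i < n) F i).

Lemma sum_lin3 n (F G H K : 'I_n -> R) a b c :
  (forall i, F i = a * G i + b * H i + c * K i) ->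
  SUM n F = a * SUM n G + b * SUM n H + c * SUM n K.
Proof.
move=> hF.
change ((\sum_(i < n) F i = a * (\sum_(i < n) G i) + b * (\sum_(i < n) H i) + c * (\sum_(i < n) K i))%R).
rewrite !mulr_sumr -!big_split /=; apply: eq_bigr => i _; exact: hF.
Qed.

Lemma sum_le n (F G : 'I_n -> R) : (forall i, F i <= G i) -> SUM n F <= SUM n G.
Proof.
move=> hF; change ((\sum_(i < n) F i <= \sum_(i < n) G i)%coqR).
apply/RleP; apply: ler_sum => i _; apply/RleP; exact: hF.
Qed.

Lemma sum_abs_le n (F : 'I_n -> R) d : (forall i, Rabs (F i) <= d) -> Rabs (SUM n F) <= INR n * d.
Proof.
move=> hF; change ((Rabs (\sum_(i < n) F i) <= INR n * d)%coqR).
rewrite RabsE INRE RmultE; apply/RleP.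
apply: le_trans (ler_norm_sum _ _ _) _.
have -> : (n%:R * d = \sum_(i < n) d)%R by rewrite sumr_const card_ord mulr_natl.
apply: ler_sum => i _; apply/RleP; rewrite -RabsE; exact: hF.
Qed.

Lemma sum_nonneg n (F : 'I_n -> R) : (forall i, 0 <= F i) -> 0 <= SUM n F.
Proof.
move=> hF; change ((0 <= \sum_(i < n) F i)%coqR).
apply/RleP; apply: sumr_ge0 => i _; apply/RleP; exact: hF.
Qed.

Lemma sum_term_le n (F : 'I_n -> R) j : (forall i, 0 <= F i) -> F j <= SUM n F.
Proof.
move=> hF; change ((F j <= \sum_(i < n) F i)%coqR).
apply/RleP; rewrite (bigD1 j) //= lerDl; apply: sumr_ge0 => i _; apply/RleP; exact: hF.
Qed.

Lemma sum_pick n (F : 'I_n -> R) j : SUM n (fun i => if i == j then F i else 0) = F j.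
Proof.
change ((\sum_(i < n) (if i == j then F i else 0) = F j)%R).
by rewrite -big_mkcond /= big_pred1_eq.
Qed.

Lemma sum_zero n (F : 'I_n -> R) : (forall i, F i = 0) -> SUM n F = 0.
Proof.
move=> h; rewrite (@sum_lin3 _ _ (fun _ => 0) (fun _ => 0) (fun _ => 0) 0 0 0); first lra.
move=> i; rewrite h; lra.
Qed.

Lemma sum_ext n (F G : 'I_n -> R) : (forall i, F i = G i) -> SUM n F = SUM n G.
Proof. move=> h; rewrite (@sum_lin3 _ _ G G G 1 0 0); first lra. move=> i; rewrite h; lra. Qed.

Lemma dot_nonneg N (h : pt N) : 0 <= dot h h.
Proof. apply: sum_nonneg => i; nra. Qed.

Lemma vnorm_sq N (h : pt N) : vnorm h ^ 2 = dot h h.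
Proof. rewrite /vnorm /= Rmult_1_r sqrt_sqrt //; exact: dot_nonneg. Qed.

Lemma vnorm_nonneg N (h : pt N) : 0 <= vnorm h.
Proof. exact: sqrt_pos. Qed.

Lemma coord_le_vnorm N (h : pt N) i : Rabs (h i) <= vnorm h.
Proof.
have h1 : h i * h i <= dot h h by apply: (sum_term_le (fun i => h i * h i)) => k; nra.
have h2 : vnorm h * vnorm h = dot h h by rewrite -vnorm_sq /=; ring.
have h3 := vnorm_nonneg h.
rewrite -(Rabs_pos_eq (vnorm h) h3); apply: Rsqr_le_abs_0; rewrite /Rsqr; nra.
Qed.

Lemma vnorm_coord_lt N (h : pt N) d : 0 < d -> (forall i, Rabs (h i) < d) ->
  vnorm h < (INR N + 1) * d.
Proof.
move=> d0 hd.
have h1 : Rabs (dot h h) <= INR N * (d * d).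
  apply: sum_abs_le => i; rewrite Rabs_mult; have := hd i; have := Rabs_pos (h i); nra.
have hN := pos_INR N.
have h2 : vnorm h * vnorm h = dot h h by rewrite -vnorm_sq /=; ring.
have h3 := vnorm_nonneg h; have h4 := dot_nonneg h.
rewrite Rabs_pos_eq // in h1.
apply: Rsqr_incrst_0; rewrite /Rsqr; nra.
Qed.

Lemma dot_scal_l N k (a b : pt N) : dot (vscal k a) b = k * dot a b.
Proof. rewrite /dot (@sum_lin3 _ _ (fun i => a i * b i) (fun _ => 0) (fun _ => 0) k 0 0); first lra.
move=> i; rewrite /vscal; lra. Qed.

Lemma vnorm_scal N k (a : pt N) : vnorm (vscal k a) = Rabs k * vnorm a.
Proof.
rewrite /vnorm dot_scal_l.
have -> : dot a (vscal k a) = k * dot a a.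
  rewrite /dot (@sum_lin3 _ _ (fun i => a i * a i) (fun _ => 0) (fun _ => 0) k 0 0); first lra.
  move=> i; rewrite /vscal; lra.
rewrite -Rmult_assoc sqrt_mult_alt; last by apply: Rle_0_sqr.
by rewrite -/(Rsqr k) sqrt_Rsqr_abs.
Qed.

Lemma dot_expand N (y ys x0 : pt N) :
  dot (vsub y x0) (vsub y x0) =
  dot (vsub ys x0) (vsub ys x0) + 2 * dot (vsub ys x0) (vsub y ys) + dot (vsub y ys) (vsub y ys).
Proof.
rewrite /dot (@sum_lin3 _ _ (fun i => vsub ys x0 i * vsub ys x0 i) (fun i => vsub ys x0 i * vsub y ys i)
  (fun i => vsub y ys i * vsub y ys i) 1 2 1); first lra.
move=> i; rewrite /vsub; ring.
Qed.

Definition diagm N (k : R) : mat N := fun i j => if i == j then k else 0.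

Lemma diagm_sym N k : msym (@diagm N k).
Proof. by move=> i j; rewrite /diagm eq_sym. Qed.

Lemma quad_diagm N k (h : pt N) : quad (diagm k) h = k * dot h h.
Proof.
rewrite /quad (@sum_ext _ _ (fun i => k * (h i * h i))).
  by rewrite /dot (@sum_lin3 _ _ (fun i => h i * h i) (fun _ => 0) (fun _ => 0) k 0 0); [lra|move=> i; lra].
move=> i; rewrite (@sum_ext _ _ (fun j => if j == i then k * h i * h j else 0)).
  by rewrite (@sum_pick _ (fun j => k * h i * h j)); ring.
move=> j; rewrite /diagm eq_sym; case: (j == i); ring.
Qed.

Lemma trace_diagm N (A : mat N) k : trace (mmul A (diagm k)) = k * trace A.
Proof.
rewrite /trace (@sum_lin3 _ _ (fun i => A i i) (fun _ => 0) (fun _ => 0) k 0 0); first lra.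
move=> i; rewrite /mmul (@sum_ext _ _ (fun j => if j == i then A i j * k else 0)).
  by rewrite (@sum_pick _ (fun j => A i j * k)); ring.
move=> j; rewrite /diagm; case: (j == i); ring.
Qed.

Lemma trace_diffmat N (s : mat N) : trace (diffmat s) = mnorm s ^ 2.
Proof.
rewrite /mnorm /= Rmult_1_r sqrt_sqrt //.
apply: sum_nonneg => i; apply: sum_nonneg => j; nra.
Qed.

Lemma diffmat0 N (s : mat N) : diffmat s = @Defs.mzero N -> forall i j, s i j = 0.
Proof.
move=> h i j.
pose T := fun i => \big[Rplus/0]_(m < N) (s i m * s i m).
have e : SUM N T = 0.
  have -> : SUM N T = trace (diffmat s) by [].
  by rewrite h /trace sum_zero.
have nn : forall i, 0 <= T i by move=> i'; apply: sum_nonneg => m; nra.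
have h1 : T i <= SUM N T := sum_term_le T i nn.
have h2 : s i j * s i j <= T i := sum_term_le (fun m => s i m * s i m) j (fun m => ltac:(nra)).
have hh : s i j * s i j = 0 by have := nn i; nra.
nra.
Qed.
Definition mq (t2 s : R) := (s - t2 + Rabs (s - t2)) * / 2.
Ltac cst := apply continuity_const; intros ? ?; reflexivity.
Ltac cid := apply derivable_continuous, Ranalysis1.derivable_id.
Lemma mq_cont t2 : Ranalysis1.continuity (mq t2).
Proof.
unfold mq. apply continuity_mult; [|cst].
apply continuity_plus. apply continuity_minus; [cid|cst].
apply (continuity_comp (fun s => s - t2) Rabs). apply continuity_minus; [cid|cst]. apply Rcontinuity_abs.
Qed.
Lemma hfun_cont c l k t2 : Ranalysis1.continuity (fun s => c*s - l*s - k * (mq t2 s * mq t2 s)).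
Proof.
apply continuity_minus. apply continuity_minus.
apply continuity_mult; [cst|cid]. apply continuity_mult; [cst|cid].
apply continuity_mult; [cst|]. apply continuity_mult; apply mq_cont.
Qed.
Lemma mq_nonneg t2 s : 0 <= mq t2 s.
Proof. unfold mq, Rabs; destruct Rcase_abs; lra. Qed.
Lemma mq_le t2 s : s <= t2 -> mq t2 s = 0.
Proof. unfold mq, Rabs; destruct Rcase_abs; lra. Qed.
Lemma mq_ge t2 s : t2 <= s -> mq t2 s = s - t2.
Proof. unfold mq, Rabs; destruct Rcase_abs; lra. Qed.
Lemma q_ineq t2 s s' : mq t2 s * mq t2 s - mq t2 s' * mq t2 s' - 2 * mq t2 s' * (s - s') <= (s - s') * (s - s').
Proof.
have hsq := Rle_0_sqr (s - s'); rewrite /Rsqr in hsq.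
destruct (Rle_or_lt s t2); destruct (Rle_or_lt s' t2).
- rewrite (mq_le H) (mq_le H0); nra.
- rewrite (mq_le H) (mq_ge (Rlt_le _ _ H0)); nra.
- rewrite (mq_ge (Rlt_le _ _ H)) (mq_le H0); nra.
- rewrite (mq_ge (Rlt_le _ _ H)) (mq_ge (Rlt_le _ _ H0)); nra.
Qed.

Definition ccont N (f : pt N -> R -> R) := forall y s eps, 0 < eps -> exists del, 0 < del /\
  forall y' s', (forall i, Rabs (y' i - y i) < del) -> Rabs (s' - s) < del ->
    Rabs (f y' s' - f y s) < eps.

Lemma ccont_add N (f g : pt N -> R -> R) : ccont f -> ccont g -> ccont (fun y s => f y s + g y s).
Proof.
move=> hf hg y s eps e0.
have [d1 [d10 h1]] := hf y s (eps/2) ltac:(lra).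
have [d2 [d20 h2]] := hg y s (eps/2) ltac:(lra).
exists (Rmin d1 d2); split; first by apply: Rmin_pos.
move=> y' s' hy hs.
have := h1 y' s' (fun i => Rlt_le_trans _ _ _ (hy i) (Rmin_l _ _)) (Rlt_le_trans _ _ _ hs (Rmin_l _ _)).
have := h2 y' s' (fun i => Rlt_le_trans _ _ _ (hy i) (Rmin_r _ _)) (Rlt_le_trans _ _ _ hs (Rmin_r _ _)).
have := Rabs_triang (f y' s' - f y s) (g y' s' - g y s).
have -> : f y' s' - f y s + (g y' s' - g y s) = f y' s' + g y' s' - (f y s + g y s) by ring.
lra.
Qed.

Lemma ccont_time N (h : R -> R) : Ranalysis1.continuity h -> ccont (fun (_ : pt N) s => h s).
Proof.
move=> hc y s eps e0.
have [alp [alp0 ha]] := hc s eps e0.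
exists alp; split => // y' s' _ hs.
case: (Req_dec s' s) => [->|ne].
  by rewrite Rminus_diag Rabs_R0.
exact: (ha s' (conj (conj I (not_eq_sym ne)) hs)).
Qed.

Lemma ccont_dot N (x0 : pt N) k : ccont (fun y (_ : R) => k * dot (vsub y x0) (vsub y x0)).
Proof.
move=> y s eps e0.
set M := vnorm (vsub y x0).
have M0 : 0 <= M := vnorm_nonneg _.
have hN := pos_INR N.
have hk := Rabs_pos k.
set Q := (Rabs k + 1) * (INR N + 1) * (2 * M + 1).
have Q0 : 0 < Q by rewrite /Q; apply: Rmult_lt_0_compat; [apply: Rmult_lt_0_compat|]; lra.
exists (Rmin 1 (eps / Q)); split.
  by apply: Rmin_pos; [lra|apply: Rdiv_lt_0_compat].
move=> y' s' hy _.
set d := Rmin 1 (eps / Q).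
have d1 : d <= 1 by apply: Rmin_l.
have dQ : d * Q <= eps.
  have : d <= eps / Q by apply: Rmin_r.
  move=> h; have := Rmult_le_compat_r Q _ _ (Rlt_le _ _ Q0) h.
  by rewrite /Rdiv Rmult_assoc Rinv_l ?Rmult_1_r; lra.
have d0 : 0 < d by apply: Rmin_pos; [lra|apply: Rdiv_lt_0_compat].
set a := vsub y x0. set h := vsub y' y.
have ha : Rabs (dot a h) <= INR N * (M * d).
  apply: sum_abs_le => i; rewrite Rabs_mult.
  have c1 : Rabs (a i) <= M := coord_le_vnorm a i.
  have c2 : Rabs (h i) < d := hy i.
  have := Rabs_pos (a i); have := Rabs_pos (h i); nra.
have hh : Rabs (dot h h) <= INR N * (d * d).
  apply: sum_abs_le => i; rewrite Rabs_mult.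
  have c2 : Rabs (h i) < d := hy i.
  have := Rabs_pos (h i); nra.
rewrite (dot_expand y' y x0) -/a -/h.
have -> : k * (dot a a + 2 * dot a h + dot h h) - k * dot a a = k * (2 * dot a h + dot h h) by ring.
rewrite Rabs_mult.
have t1 : Rabs (2 * dot a h + dot h h) <= INR N * d * (2 * M + 1).
  have := Rabs_triang (2 * dot a h) (dot h h); rewrite Rabs_mult (Rabs_pos_eq 2); last lra.
  have : INR N * (d * d) <= INR N * d by apply: Rmult_le_compat_l => //; nra.
  nra.
have t2 : Rabs k * (INR N * d * (2 * M + 1)) < d * Q.
  rewrite /Q. have : 0 < d * (2 * M + 1) by nra.
  move=> p; have : INR N * d * (2 * M + 1) < (INR N + 1) * (d * (2 * M + 1)) by nra.
  nra.
have t3 : Rabs k * Rabs (2 * dot a h + dot h h) <= Rabs k * (INR N * d * (2 * M + 1)) by apply: Rmult_le_compat_l.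
lra.
Qed.

Lemma rmax_lip a b c : Rabs (Rmax a c - Rmax b c) <= Rabs (a - b).
Proof. unfold Rmax, Rabs; destruct (Rle_dec a c); destruct (Rle_dec b c); destruct (Rcase_abs (a - b)); try destruct (Rcase_abs (c - c)); try destruct (Rcase_abs (a - c)); try destruct (Rcase_abs (c - b)); try destruct (Rcase_abs (c-b)); lra. Qed.

Lemma ccont_u N (u : pt N -> R -> R) t1 : cont_on_closed_half u -> 0 <= t1 ->
  ccont (fun y s => u y (Rmax s t1)).
Proof.
move=> hu t10 y s eps e0.
have hm : 0 <= Rmax s t1 by have := Rmax_r s t1; lra.
have [dl [dl0 hd]] := hu y (Rmax s t1) hm eps e0.
have hN := pos_INR N.
exists (dl / (INR N + 1)); split; first by apply: Rdiv_lt_0_compat; lra.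
move=> y' s' hy hs.
have e1 : (INR N + 1) * (dl / (INR N + 1)) = dl by field; lra.
have e2 : dl / (INR N + 1) <= dl.
  rewrite -{2}e1; have : 0 < dl / (INR N + 1) by apply: Rdiv_lt_0_compat; lra.
  nra.
apply: hd.
- have := Rmax_r s' t1; lra.
- have := @vnorm_coord_lt N (vsub y' y) (dl / (INR N + 1)) ltac:(apply: Rdiv_lt_0_compat; lra) hy.
  by rewrite e1.
- have := rmax_lip s' s t1; lra.
Qed.

Lemma periodic_min N (v : pt N -> R) : periodic v ->
  (forall x eps, 0 < eps -> exists del, 0 < del /\
     forall y, vnorm (vsub y x) < del -> Rabs (v y - v x) < eps) ->
  exists xm, forall y, v xm <= v y.
Proof.
move=> hp hc.
have hN := pos_INR N.
have cf : forall y s eps, 0 < eps -> exists del, 0 < del /\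
     forall y' s', (forall i, Rabs (y' i - y i) < del) -> Rabs (s' - s) < del ->
       Rabs ((fun y (_ : R) => - v y) y' s' - (fun y (_ : R) => - v y) y s) < eps.
  move=> y s eps e0; have [dl [dl0 hd]] := hc y eps e0.
  exists (dl / (INR N + 1)); split; first by apply: Rdiv_lt_0_compat; lra.
  move=> y' s' hy _ /=.
  have e1 : (INR N + 1) * (dl / (INR N + 1)) = dl by field; lra.
  have := @vnorm_coord_lt N (vsub y' y) (dl / (INR N + 1)) ltac:(apply: Rdiv_lt_0_compat; lra) hy.
  rewrite e1 => /hd; rewrite -Rabs_Ropp; congr (Rabs _ < _); ring.
have [ys [ss [hys [hss hmax]]]] := box_EVT _ (fun y (_ : R) => - v y) (fun _ => /2) (/2) 0 0 (Rlt_le _ _ (pos_half_prf)) (Rle_refl 0) cf.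
exists ys => y.
pose k := fun i => Z.sub (up (y i)) 1.
pose z := fun i => y i - IZR (k i).
have ez : zshift z k = y.
  by apply: funext => i; rewrite /zshift /z; ring.
rewrite -ez hp.
have hz : forall i, Rabs (z i - / 2) <= / 2.
  move=> i; have [h1 h2] := archimed (y i).
  rewrite /z /k minus_IZR; apply: Rabs_le; lra.
have := hmax z 0 hz (conj (Rle_refl 0) (Rle_refl 0)); lra.
Qed.

Lemma vnorm_self N (x : pt N) : vnorm (vsub x x) = 0.
Proof.
rewrite /vnorm /dot (@sum_zero _ _) ?sqrt_0 // => i; rewrite /vsub; ring.
Qed.

Lemma theta_inh N (Theta : Type) (sigma : Theta -> pt N -> mat N)
  (H : Theta -> pt N -> pt N -> R) c v :
  visc_sol_stat sigma H 0 c v -> exists th : Theta, True.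
Proof.
move=> [hp [hc [_ hsup]]].
have [xm hm] := periodic_min hp hc.
have hsj : subjet v xm (@vzero N) (@Defs.mzero N).
  split; first by [].
  move=> e e0; exists 1; split; first lra.
  move=> y _.
  have d0 : dot (@vzero N) (vsub y xm) = 0 by apply: sum_zero => i; rewrite /vzero; ring.
  have q0 : quad (@Defs.mzero N) (vsub y xm) = 0.
    by apply: sum_zero => i; apply: sum_zero => j; rewrite /Defs.mzero; ring.
  rewrite d0 q0; have := hm y; have := vnorm_nonneg (vsub y xm) => hn.
  have : 0 <= e * vnorm (vsub y xm) ^ 2 by apply: Rmult_le_pos; [lra| apply: pow_le].
  lra.
have [th _] := hsup xm _ _ hsj 1 Rlt_0_1.
by exists th.
Qed.

Theorem lemma5p1 (N : nat) (Theta : Type) (d : Theta -> Theta -> R) (C : R)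
  (sigma : Theta -> pt N -> mat N) (H : Theta -> pt N -> pt N -> R)
  (u0 : pt N -> R) (u : pt N -> R -> R) (c : R) (K : pt N -> Prop) :
  is_metric d ->
  standing_data C sigma H ->
  visc_sol_E sigma H u0 u ->
  (forall t, 0 <= t -> lipschitz C (fun x => u x t)) ->
  (forall lam, 0 < lam -> exists v, visc_sol_stat sigma H lam 0 v /\ lipschitz C v) ->
  (exists v L, visc_sol_stat sigma H 0 c v /\ lipschitz L v) ->
  assumption_H sigma H c K ->
  forall x0, K x0 ->
  forall s t, 0 <= s -> s <= t -> u x0 t + c * t <= u x0 s + c * s.
Proof.
move=> _ hsd hE hLu _ [v [L [hS _]]] hA x0 Kx0 t1 t2 t10 t12.
case: (Rle_or_lt (u x0 t2 + c * t2) (u x0 t1 + c * t1)) => // hlt.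
exfalso.
have [th0 _] := theta_inh hS.
case: hsd => C0 [_ [_ [hsig [_ [_ hHL]]]]].
case: hE => hcont [_ [_ [hsub _]]].
case: hA => mu0 [_ [_ [_ [hdeg [hHK _]]]]].
have t12' : t1 < t2.
  case: t12 => // e; rewrite e in hlt; lra.
pose g := fun s => u x0 s + c * s.
pose D := g t2 - g t1.
have D0 : 0 < D by rewrite /D /g; lra.
have [CR [CR0 hCR]] := hHL (2 * C) ltac:(lra).
pose lam := D / (2 * (t2 - t1)).
have lam0 : 0 < lam by apply: Rdiv_lt_0_compat; lra.
have lamE : lam * (t2 - t1) = D / 2 by rewrite /lam; field; lra.
pose B := 2 * (C * C * C * C) + CR * C + 1.
have C4 : 0 < C * C * C * C by repeat apply: Rmult_lt_0_compat.
have B0 : 0 < B by rewrite /B; nra.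
have CC0 : 0 < C * C by nra.
pose eps := Rmin (D / (C * C)) (lam / B) / 2.
have eps0 : 0 < eps.
  rewrite /eps; apply: Rdiv_lt_0_compat; last lra.
  by apply: Rmin_pos; apply: Rdiv_lt_0_compat.
have epsD : C * C * eps <= D / 2.
  have : eps <= D / (C * C) / 2 by rewrite /eps; have := Rmin_l (D / (C * C)) (lam / B); lra.
  move=> h; have := Rmult_le_compat_l (C * C) _ _ (Rlt_le _ _ CC0) h.
  have -> : C * C * (D / (C * C) / 2) = D / 2 by field; lra.
  done.
have epsB : B * eps <= lam / 2.
  have : eps <= lam / B / 2 by rewrite /eps; have := Rmin_r (D / (C * C)) (lam / B); lra.
  move=> h; have := Rmult_le_compat_l B _ _ (Rlt_le _ _ B0) h.
  have -> : B * (lam / B / 2) = lam / 2 by field; lra.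
  done.
pose kap := Rabs (g (t2 + 1) - g t2) + C * C * eps + 1.
have kap0 : 0 < kap by rewrite /kap; have := Rabs_pos (g (t2 + 1) - g t2); nra.
pose hf := fun s => c * s - lam * s - kap * (mq t2 s * mq t2 s).
pose f := fun y s => u y (Rmax s t1) + hf s + (- / eps) * dot (vsub y x0) (vsub y x0).
have cf : ccont f.
  apply: ccont_add; first apply: ccont_add.
  - exact: ccont_u.
  - exact: (ccont_time (hfun_cont c lam kap t2)).
  - exact: ccont_dot.
have [ys [ss [hys [hss hmax]]]] := box_EVT _ f x0 (C * eps + 1) t1 (t2 + 1)
  ltac:(nra) ltac:(lra) cf.
pose r := vnorm (vsub ys x0).
have r0 : 0 <= r := vnorm_nonneg _.
have fbox : forall y s, t1 <= s -> f y s = u y s + hf s - / eps * vnorm (vsub y x0) ^ 2.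
  by move=> y s hs; rewrite /f Rmax_left // vnorm_sq; ring.
have Lip : forall y s, 0 <= s -> u y s <= u x0 s + C * vnorm (vsub y x0).
  move=> y s hs; have := hLu s hs y x0; rewrite /=.
  move/rabs_le; lra.
have quadb : forall R0, 0 <= R0 -> C * R0 - / eps * R0 ^ 2 <= C * C * eps / 4.
  move=> R0 _.
  have e : C * C * eps / 4 - (C * R0 - / eps * R0 ^ 2) = / eps * ((R0 - C * eps / 2) * (R0 - C * eps / 2)).
    by field; lra.
  have : 0 <= / eps * ((R0 - C * eps / 2) * (R0 - C * eps / 2)).
    apply: Rmult_le_pos; [apply: Rlt_le; apply: Rinv_0_lt_compat; lra| apply: Rle_0_sqr].
  lra.
have upper : forall y s, t1 <= s -> f y s <= g s - lam * s - kap * (mq t2 s * mq t2 s) + C * C * eps / 4.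
  move=> y s hs; rewrite fbox //.
  have := Lip y s ltac:(lra); have := quadb (vnorm (vsub y x0)) (vnorm_nonneg _).
  rewrite /hf /g; lra.
have fx0 : forall s, t1 <= s -> f x0 s = g s - lam * s - kap * (mq t2 s * mq t2 s).
  move=> s hs; rewrite fbox // vnorm_self /hf /g; ring.
have x0box : forall i, Rabs (x0 i - x0 i) <= C * eps + 1.
  move=> i; rewrite Rminus_diag Rabs_R0; nra.
have rle : r <= C * eps.
  have h := hmax x0 ss x0box hss.
  rewrite !fbox in h; try lra.
  rewrite vnorm_self in h.
  have := Lip ys ss ltac:(lra).
  rewrite -/r => hl.
  rewrite -/r in h.
  have e00 : (0:R) ^ 2 = 0 by ring.
  rewrite e00 in h.
  have h2 : / eps * r ^ 2 <= C * r by lra.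
  have h3 : r * r <= C * eps * r.
    have := Rmult_le_compat_l eps _ _ (Rlt_le _ _ eps0) h2.
    have -> : eps * (/ eps * r ^ 2) = r * r by field; lra.
    lra.
  have : 0 < C * eps by apply: Rmult_lt_0_compat.
  nra.
have hmt2 := hmax x0 t2 x0box ltac:(lra).
rewrite fx0 in hmt2; last lra.
rewrite (mq_le (Rle_refl t2)) in hmt2.
have hup := upper ys ss ltac:(lra).
have ss1 : t1 < ss.
  case: (Rle_lt_or_eq_dec t1 ss ltac:(lra)) => // e.
  rewrite -e in hmt2; rewrite -e (mq_le (Rlt_le _ _ t12')) in hup.
  have : D <= lam * (t2 - t1) + C * C * eps / 4 by rewrite /D; lra.
  lra.
have ss2 : ss < t2 + 1.
  case: (Rle_lt_or_eq_dec ss (t2 + 1) ltac:(lra)) => // e.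
  rewrite e in hmt2; rewrite e (mq_ge (ltac:(lra) : t2 <= t2 + 1)) in hup.
  have := Rle_abs (g (t2 + 1) - g t2).
  have e1 : (t2 + 1 - t2) * (t2 + 1 - t2) = 1 by ring.
  have : 0 < C * C * eps by apply: Rmult_lt_0_compat.
  rewrite e1 /kap in hup; lra.
pose a := - c + lam + kap * (2 * mq t2 ss).
pose p := vscal (2 / eps) (vsub ys x0).
pose X := @diagm N (2 / eps).
have hsj : psuperjet u ys ss a p X.
  split; first exact: diagm_sym.
  move=> e e0.
  pose del := Rmin (Rmin 1 (ss - t1)) (Rmin (t2 + 1 - ss) (e / kap)).
  have del0 : 0 < del.
    apply: Rmin_pos; apply: Rmin_pos; try lra; exact: Rdiv_lt_0_compat.
  have dl1 : del <= 1 by rewrite /del; have := Rmin_l (Rmin 1 (ss - t1)) (Rmin (t2 + 1 - ss) (e / kap)); have := Rmin_l 1 (ss - t1); lra.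
  have dl2 : del <= ss - t1 by rewrite /del; have := Rmin_l (Rmin 1 (ss - t1)) (Rmin (t2 + 1 - ss) (e / kap)); have := Rmin_r 1 (ss - t1); lra.
  have dl3 : del <= t2 + 1 - ss by rewrite /del; have := Rmin_r (Rmin 1 (ss - t1)) (Rmin (t2 + 1 - ss) (e / kap)); have := Rmin_l (t2 + 1 - ss) (e / kap); lra.
  have dl4 : del <= e / kap by rewrite /del; have := Rmin_r (Rmin 1 (ss - t1)) (Rmin (t2 + 1 - ss) (e / kap)); have := Rmin_r (t2 + 1 - ss) (e / kap); lra.
  exists del; split => // y s s0 hy hs.
  have ybox : forall i, Rabs (y i - x0 i) <= C * eps + 1.
    move=> i.
    have := coord_le_vnorm (vsub y ys) i; have := coord_le_vnorm (vsub ys x0) i.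
    rewrite /vsub -/r => h1 h2.
    have := Rabs_triang (y i - ys i) (ys i - x0 i).
    have -> : y i - ys i + (ys i - x0 i) = y i - x0 i by ring.
    move: hy; rewrite /vsub; lra.
  have sbox : t1 <= s <= t2 + 1 by move/rabs_le: (Rlt_le _ _ hs); lra.
  have hm := hmax y s ybox sbox.
  rewrite !fbox in hm; try lra.
  rewrite !vnorm_sq (dot_expand y ys x0) in hm.
  rewrite dot_scal_l quad_diagm.
  have hq := q_ineq t2 s ss.
  have hq' := Rmult_le_compat_l kap _ _ (Rlt_le _ _ kap0) hq.
  have hks : kap * ((s - ss) * (s - ss)) <= e * Rabs (s - ss).
    have habs : (s - ss) * (s - ss) = Rabs (s - ss) * Rabs (s - ss).
      by rewrite -Rabs_mult Rabs_pos_eq //; apply: Rle_0_sqr.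
    rewrite habs.
    have : kap * Rabs (s - ss) <= e.
      have := Rmult_le_compat_l kap _ _ (Rlt_le _ _ kap0) (Rlt_le _ _ (Rlt_le_trans _ _ _ hs dl4)).
      have -> : kap * (e / kap) = e by field; lra.
      done.
    have := Rabs_pos (s - ss); nra.
  have hn : 0 <= e * vnorm (vsub y ys) ^ 2 by apply: Rmult_le_pos; [lra|apply: pow_le; apply: vnorm_nonneg].
  rewrite /hf in hm; rewrite /a.
  have ei : 2 / eps = 2 * / eps by rewrite /Rdiv.
  rewrite ei.
  move: hm hq' hks hn; simpl; lra.
have hL := hsub ys ss a p X ltac:(lra) hsj th0.
rewrite /Lop /X trace_diagm trace_diffmat in hL.
have sig0 : msub (sigma th0 ys) (sigma th0 x0) = sigma th0 ys.
  apply: funext => i; apply: funext => j.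
  by rewrite /msub (diffmat0 (hdeg x0 Kx0 th0) i j); ring.
have hsb := hsig th0 ys x0; rewrite sig0 -/r in hsb.
have mn0 : 0 <= mnorm (sigma th0 ys) by apply: sqrt_pos.
have hmn : mnorm (sigma th0 ys) ^ 2 <= (C * (C * eps)) ^ 2.
  apply: pow_incr; split => //.
  apply: Rle_trans hsb _; apply: Rmult_le_compat_l; lra.
have htr : 2 / eps * mnorm (sigma th0 ys) ^ 2 <= 2 * (C * C * C * C) * eps.
  have := Rmult_le_compat_l (2 / eps) _ _ ltac:(apply: Rlt_le; apply: Rdiv_lt_0_compat; lra) hmn.
  have -> : 2 / eps * (C * (C * eps)) ^ 2 = 2 * (C * C * C * C) * eps by field; lra.
  done.
have pn : vnorm p <= 2 * C.
  rewrite /p vnorm_scal Rabs_pos_eq; last by apply: Rlt_le; apply: Rdiv_lt_0_compat; lra.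
  rewrite -/r.
  have := Rmult_le_compat_l (2 / eps) _ _ ltac:(apply: Rlt_le; apply: Rdiv_lt_0_compat; lra) rle.
  have -> : 2 / eps * (C * eps) = 2 * C by field; lra.
  done.
have hH := hCR th0 ys x0 p p pn pn.
rewrite vnorm_self -/r in hH.
move/rabs_le: hH => hH.
have hK := hHK th0 x0 p Kx0.
have m0 := mq_nonneg t2 ss.
have : 0 <= kap * (2 * mq t2 ss) by apply: Rmult_le_pos; lra.
have : CR * (r + 0) <= CR * (C * eps) by apply: Rmult_le_compat_l; lra.
rewrite /a /B in hL epsB.
lra.
Qed.
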